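(* Let $\mathcal X$ be a set, let $\kappa:\mathcal X\to\mathbb N\cup\{\infty\}$ and $C_\theta:\mathcal X\to\mathbb R_{\ge 0}$ be maps, and let $\oplus:\mathcal X\times\mathcal X\to\mathcal X$ be a binary operation. For $x_1,\dots,x_m\in\mathcal X$ with $m\ge 3$, write $x_1\oplus\cdots\oplus x_m$ for the right-associated composition $x_1\oplus(x_2\oplus(\cdots\oplus x_m))$. Suppose we are given a notion of independence for pairs $x,y\in\mathcal X$ and of joint independence for finite families in $\mathcal X$. Define \[ \mathcal X_{\mathrm{fin}}:=\{x\in\mathcal X:\kappa(x)<\infty\},\qquad K:=\kappa(\mathcal X_{\mathrm{fin}})\subseteq\mathbb N. \] Assume the following, on $\mathcal X_{\mathrm{fin}}$: (A1) (Monotonicity) For all $x,y\in\mathcal X_{\mathrm{fin}}$, if $\kappa(x)\le\kappa(y)$ then $C_\theta(x)\le C_\theta(y)$. (A2) (Additivity under composition of independent questions) For all independent $x,y\in\mathcal X_{\mathrm{fin}}$, \[ \kappa(x\oplus y)=\kappa(x)+\kappa(y),\qquad C_\theta(x\oplus y)=C_\theta(x)+C_\theta(y). \] (A3) For every $u\in K$ and every $m\in\mathbb N$ ($m\ge 1$), there exist $x_1,\dots,x_m\in\mathcal X_{\mathrm{fin}}$ with $\kappa(x_i)=u$ for all $i$ and $\{x_1,\dots,x_m\}$ jointly independent; consequently $x_1\oplus\cdots\oplus x_m$ is valid and \[ \kappa(x_1\oplus\cdots\oplus x_m)=mu\in K,\qquad C_\theta(x_1\oplus\cdots\oplus x_m)=\sum_{i=1}^m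 C_\theta(x_i). \] Then there exists a constant $\alpha_\theta\ge 0$ such that $C_\theta(x)=\alpha_\theta\,\kappa(x)$ for all $x\in\mathcal X_{\mathrm{fin}}$.
   Context: Interpretation (not needed for the statement): $\mathcal X$ is a space of questions, $\kappa(x)$ is the complexity of question $x$ (minimal number of primitive solution steps), $C_\theta(x)$ is the expected number of reasoning tokens a model $\theta$ generates on $x$, and $x\oplus y$ is the composite question formed by concatenating $x$ and $y$ with a connector prompt. Independence of $x,y$ is the abstract relation under which (A2) applies; joint independence of a finite family is the abstract property used in (A3), whose stated consequence (validity of the composition, additivity of $\kappa$ and of $C_\theta$ over the right-associated composition) is part of the assumption. *)

(* Defs.v *)
From HB Require Import structures.
From mathcomp Require Import all_boot all_order all_algebra.
From mathcomp Require Import reals.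
Set Implicit Arguments. Unset Strict Implicit. Unset Printing Implicit Defensive.
Import Order.TTheory GRing.Theory Num.Theory.

(* kappa : X -> option nat, where [None] encodes the value infinity. *)

Fixpoint rcomp (X : Type) (oplus : X -> X -> X) (x1 : X) (s : seq X) : X :=
  match s with
  | [::] => x1
  | y :: s' => oplus x1 (rcomp oplus y s')
  end.

(* Main.v *)
Require Import Defs.
From HB Require Import structures.
From mathcomp Require Import all_boot all_order all_algebra.
From mathcomp Require Import reals.
From mathcomp Require boolp.
Import Order.TTheory GRing.Theory Num.Theory.
Local Open Scope ring_scope.

Theorem proposition1 (R : realType) (X : Type)
  (kappa : X -> option nat) (C : X -> R) (oplus : X -> X -> X)
  (indep : X -> X -> Prop) (jindep : seq X -> Prop) (valid : X -> Prop)
  (C_ge0 : forall x, 0 <= C x)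
  (A1 : forall x y u v, kappa x = Some u -> kappa y = Some v ->
          (u <= v)%N -> C x <= C y)
  (A2 : forall x y u v, kappa x = Some u -> kappa y = Some v -> indep x y ->
          kappa (oplus x y) = Some (u + v)%N /\ C (oplus x y) = C x + C y)
  (A3 : forall (x0 : X) (u m : nat), kappa x0 = Some u -> (0 < m)%N ->
          exists (x1 : X) (s : seq X),
            size s = m.-1 /\
            (forall i, (i < m)%N -> kappa (nth x1 (x1 :: s) i) = Some u) /\
            jindep (x1 :: s) /\
            valid (rcomp oplus x1 s) /\
            kappa (rcomp oplus x1 s) = Some (m * u)%N /\
            C (rcomp oplus x1 s) = \sum_(i < m) C (nth x1 (x1 :: s) i)) :
  exists alpha : R, 0 <= alpha /\
    forall x u, kappa x = Some u -> C x = alpha * u%:R.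
Proof.
have eqC : forall x y u, kappa x = Some u -> kappa y = Some u -> C x = C y.
  move=> x y u hx hy; apply/le_anti; rewrite (A1 _ _ _ _ hx hy) //.
  by rewrite (A1 _ _ _ _ hy hx).
have mulC : forall x u m, kappa x = Some u -> (0 < m)%N ->
    exists y, kappa y = Some (m * u)%N /\ C y = m%:R * C x.
  move=> x u m hx hm.
  have [x1 [s [_ [hk [_ [_ [hky hCy]]]]]]] := A3 x u m hx hm.
  exists (rcomp oplus x1 s); split => //; rewrite hCy.
  rewrite (eq_bigr (fun _ => C x)); first by rewrite sumr_const card_ord mulr_natl.
  by move=> i _; apply: (eqC _ _ u) => //; apply: hk.
have zero : forall x, kappa x = Some 0%N -> C x = 0.
  move=> x hx; have [y [hy hCy]] := mulC x 0%N 2%N hx isT.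
  rewrite muln0 in hy; rewrite (eqC y x 0%N hy hx) in hCy.
  have : C x * (2%:R - 1) = 0 by rewrite mulrBr mulr1 mulrC -hCy subrr.
  move/eqP; rewrite mulf_eq0 => /orP [/eqP //|].
  by rewrite (_ : 2%:R - 1 = 1 :> R) ?oner_eq0 // -natr1 addrK.
case: (boolp.pselect (exists x0 u0, kappa x0 = Some u0 /\ (0 < u0)%N)) => [[x0 [u0 [h0 hu0]]]|hn].
  exists (C x0 / u0%:R); split; first by rewrite divr_ge0.
  move=> x u hx; case: u hx => [|u] hx; first by rewrite zero // mulr0.
  have [y [hy hCy]] := mulC x0 u0 u.+1 h0 isT.
  have [y' [hy' hCy']] := mulC x u.+1 u0 hx hu0.
  rewrite mulnC in hy'; rewrite (eqC y y' _ hy hy') hCy' in hCy.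
  have hu0' : u0%:R != 0 :> R by rewrite pnatr_eq0 -lt0n.
  apply: (mulfI hu0'); by rewrite hCy mulrA [u0%:R * _]mulrC divfK // mulrC.
exists (0 : R); split => //.
move=> x u hx; case: u hx => [|u] hx; first by rewrite zero // mul0r.
by exfalso; apply: hn; exists x, u.+1.
Qed.
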